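(* Let $p$ be an odd prime and let $\mathcal{S}\subset\mathbb{A}^3$ be the affine surface over $\mathbb{F}_{p^2}$ defined by $y^p-y=x^{p+1}z^2+x^2z^{p+1}$. Then the number of affine $\mathbb{F}_{p^2}$-points is $$\#\mathcal{S}(\mathbb{F}_{p^2})=p\big(2(p-1)^3+2(p-1)^2+2p^2-1\big)=2p^4-2p^3+2p^2-p.$$ *)

(* Defs.v *)
From mathcomp Require Import all_boot all_algebra.
Set Implicit Arguments. Unset Strict Implicit. Unset Printing Implicit Defensive.
Import GRing.Theory.
Local Open Scope ring_scope.

Definition onS (F : fieldType) (p : nat) (x y z : F) : bool :=
  y ^+ p - y == x ^+ p.+1 * z ^+ 2 + x ^+ 2 * z ^+ p.+1.

Definition S_points (F : finFieldType) (p : nat) : {set F * F * F} :=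
  [set t : F * F * F | onS p t.1.1 t.1.2 t.2].

(* Main.v *)
Require Import Defs.
From mathcomp Require Import all_boot all_algebra all_field ring zify.
Set Implicit Arguments. Unset Strict Implicit. Unset Printing Implicit Defensive.
Import GRing.Theory.
Local Open Scope ring_scope.

Lemma card_roots_lt (F : finFieldType) (q : {poly F}) :
  q != 0 -> (#|[set x | root q x]| < size q)%N.
Proof.
move=> q0; rewrite cardE.
apply: max_poly_roots => //; last exact: enum_uniq.
by apply/allP => x; rewrite mem_enum inE.
Qed.

Lemma card_fibers (T U : finType) (f : T -> U) :
  #|T| = (\sum_(c : U) #|[set y | f y == c]|)%N.
Proof.
rewrite -sum1_card (partition_big f xpredT) //=.
by apply: eq_bigr => c _; rewrite -sum1_card; apply: eq_bigl => y; rewrite inE.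
Qed.

Lemma fiber_add (F : finFieldType) (phi : F -> F)
  (phiB : forall a b, phi (a - b) = phi a - phi b) c y0 :
  phi y0 = c -> #|[set y | phi y == c]| = #|[set y | phi y == 0]|.
Proof.
move=> Hy0.
have phi0 : phi 0 = 0 by have := phiB 0 0; rewrite subrr => ->; rewrite subrr.
have phiN : forall a, phi (- a) = - phi a.
  by move=> a; rewrite -sub0r phiB phi0 sub0r.
have -> : [set y | phi y == c] = [set y + y0 | y in [set y | phi y == 0]].
  apply/setP => y; rewrite inE; apply/eqP/imsetP.
    move=> Hy; exists (y - y0); last by rewrite subrK.
    by rewrite inE phiB Hy Hy0 subrr.
  case=> y' ; rewrite inE => /eqP Hy' ->.
  by rewrite -[y0]opprK phiB Hy' phiN opprK add0r.
by apply: card_imset; apply: addIr.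
Qed.

Lemma frobD (F : finFieldType) p (chF : p \in [pchar F]) (a b : F) :
  (a + b) ^+ p = a ^+ p + b ^+ p.
Proof. by rewrite -!(pFrobenius_autE chF) rmorphD. Qed.
Lemma frobN (F : finFieldType) p (chF : p \in [pchar F]) (a : F) :
  (- a) ^+ p = - a ^+ p.
Proof. by rewrite -!(pFrobenius_autE chF) rmorphN. Qed.
Lemma frobB (F : finFieldType) p (chF : p \in [pchar F]) (a b : F) :
  (a - b) ^+ p = a ^+ p - b ^+ p.
Proof. by rewrite frobD // frobN. Qed.
Lemma frob2 (F : finFieldType) p (hF : #|F| = (p ^ 2)%N) (a : F) :
  a ^+ p ^+ p = a.
Proof. by rewrite -exprM mulnn -hF expf_card. Qed.
Lemma sizeXpX (F : finFieldType) p (hp : (1 < p)%N) (s : bool) :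
  size ('X^p + (-1) ^+ s *: 'X : {poly F}) = p.+1.
Proof.
rewrite size_addl ?size_polyXn // size_scale ?size_polyX ?ltnS //.
by rewrite signr_eq0.
Qed.

Lemma roots_le (F : finFieldType) p (hp : (1 < p)%N) (s : bool) :
  (#|[set x : F | (x ^+ p + (-1) ^+ s * x == 0)%R]| <= p)%N.
Proof.
have H := @card_roots_lt F ('X^p + (-1) ^+ s *: 'X).
rewrite sizeXpX // ltnS in H.
have -> : [set x : F | x ^+ p + (-1) ^+ s * x == 0] =
    [set x | root ('X^p + (-1) ^+ s *: 'X) x].
  by apply/setP => x; rewrite !inE /root !hornerE.
by apply: H; rewrite -size_poly_eq0 sizeXpX.
Qed.

Lemma AS_all (F : finFieldType) p (hp : prime p) (hF : #|F| = (p ^ 2)%N) :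
  [/\ #|[set y : F | y ^+ p - y == 0]| = p,
      #|[set c : F | c ^+ p + c == 0]| = p &
      forall c : F, #|[set y : F | y ^+ p - y == c]| =
                    if c ^+ p + c == 0 then p else 0%N].
Proof.
have chF := card_finPcharP hF hp.
have p1 := prime_gt1 hp.
set K := [set y : F | y ^+ p - y == 0].
set A := [set c : F | c ^+ p + c == 0].
set Im := [set c : F | [exists y, y ^+ p - y == c]].
have Kle : (#|K| <= p)%N.
  have := @roots_le F p p1 true.
  by congr (_ <= _)%N; apply: eq_card => x; rewrite !inE expr1 mulN1r.
have Ale : (#|A| <= p)%N.
  have := @roots_le F p p1 false.
  by congr (_ <= _)%N; apply: eq_card => x; rewrite !inE expr0 mul1r.
have phiB : forall a b : F, (a - b) ^+ p - (a - b) = (a ^+ p - a) - (b ^+ p - b).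
  by move=> a b; rewrite frobB //; ring.
have fib : forall c, #|[set y : F | y ^+ p - y == c]| = if c \in Im then #|K| else 0%N.
  move=> c; rewrite inE; case: existsP => [[y0 /eqP Hy0]|Hn].
    exact: (fiber_add phiB Hy0).
  apply/eqP; rewrite cards_eq0; apply/eqP/setP => y; rewrite !inE.
  by apply/negP => H; apply: Hn; exists y.
have ImA : Im \subset A.
  apply/subsetP => c; rewrite !inE => /existsP [y /eqP <-].
  by rewrite frobB // frob2 //; apply/eqP; ring.
have tot : (p ^ 2 = #|Im| * #|K|)%N.
  rewrite -hF (card_fibers (fun y : F => y ^+ p - y)).
  rewrite (eq_bigr _ (fun c _ => fib c)) -big_mkcond /= sum_nat_const.
  done.
have ImAc := subset_leq_card ImA.
have [hIm hK] : #|Im| = p /\ #|K| = p by nia.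
have eIm : Im = A by apply/eqP; rewrite eqEcard ImA hIm.
split => //; first by rewrite -eIm.
by move=> c; rewrite fib eIm hK inE.
Qed.

Lemma Trf (F : finFieldType) p (hp : prime p) (hF : #|F| = (p ^ 2)%N) (x z : F) :
  let f := x ^+ p.+1 * z ^+ 2 + x ^+ 2 * z ^+ p.+1 in
  (f ^+ p + f == 0) = ((x * z) ^+ p + x * z == 0) || ((x ^+ p * z) ^+ p + x ^+ p * z == 0).
Proof.
have chF := card_finPcharP hF hp.
move=> f.
set s := x ^+ p * z + x * z ^+ p.
have hs : s ^+ p = s by rewrite frobD // !exprMn !frob2 // addrC.
have ef : f = x * z * s by rewrite /f /s !exprS; ring.
have e2 : (x ^+ p * z) ^+ p + x ^+ p * z = s by rewrite exprMn frob2 // addrC.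
rewrite e2 ef exprMn hs.
have -> : (x * z) ^+ p * s + x * z * s = s * ((x * z) ^+ p + x * z).
  by rewrite exprMn; ring.
by rewrite mulf_eq0 orbC.
Qed.

Lemma cnt_lin (F : finFieldType) p (hp : prime p) (hF : #|F| = (p ^ 2)%N) (w : F) :
  w != 0 -> #|[set z : F | (w * z) ^+ p + w * z == 0]| = p.
Proof.
move=> w0; have [_ hA _] := AS_all hp hF.
rewrite -[in RHS]hA.
have -> : [set c : F | c ^+ p + c == 0] = [set w * z | z in [set z : F | (w * z) ^+ p + w * z == 0]].
  apply/setP => c; rewrite inE; apply/idP/imsetP.
    by move=> H; exists (w^-1 * c); rewrite ?inE mulVKf.
  by case=> z; rewrite inE => H ->.
by apply/esym/card_imset; apply: mulfI.
Qed.

Lemma cnt_x (F : finFieldType) p (hp : prime p) (hodd : odd p) (hF : #|F| = (p ^ 2)%N) (x : F) :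
  x != 0 ->
  #|[set z : F | ((x * z) ^+ p + x * z == 0) || ((x ^+ p * z) ^+ p + x ^+ p * z == 0)]| =
  if (x ^+ p == x) || (x ^+ p == - x) then p else (2 * p - 1)%N.
Proof.
have chF := card_finPcharP hF hp.
move=> x0.
have xp0 : x ^+ p != 0 by rewrite expf_eq0 negb_and x0 orbT.
set S1 := [set z : F | (x * z) ^+ p + x * z == 0].
set S2 := [set z : F | (x ^+ p * z) ^+ p + x ^+ p * z == 0].
have -> : [set z : F | ((x * z) ^+ p + x * z == 0) || ((x ^+ p * z) ^+ p + x ^+ p * z == 0)]
   = S1 :|: S2 by apply/setP => z; rewrite !inE.
have c1 : #|S1| = p by apply: cnt_lin.
have c2 : #|S2| = p by apply: cnt_lin.
case: ifP => hx.
  have -> : S2 = S1.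
    apply/setP => z; rewrite !inE.
    case/orP: hx => /eqP ->; first by [].
    by rewrite mulNr frobN // -opprD oppr_eq0.
  by rewrite setUid.
rewrite cardsU c1 c2.
have -> : S1 :&: S2 = [set 0].
  apply/setP => z; rewrite !inE; apply/andP/eqP; last first.
    by move=> ->; rewrite !mulr0 expr0n /= (gtn_eqF (prime_gt0 hp)) /= addr0.
  case=> /eqP e1 /eqP e2.
  have key : z * ((x - x ^+ p) * (x + x ^+ p)) = x * ((x * z) ^+ p + x * z) - x ^+ p * ((x ^+ p * z) ^+ p + x ^+ p * z).
    by rewrite !exprMn frob2 //; ring.
  move: key; rewrite e1 e2 !mulr0 subrr => /eqP; rewrite !mulf_eq0 => /orP [/eqP //|/orP [] h].
    by move: hx; rewrite subr_eq0 eq_sym in h; rewrite h.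
  by move: hx; rewrite addrC addr_eq0 in h; rewrite h orbT.
by rewrite cards1; lia.
Qed.

Lemma sum_ind (T : finType) (A : {set T}) : (\sum_(x : T) (x \in A : nat))%N = #|A|.
Proof. by rewrite -sum1_card [RHS]big_mkcond; apply eq_bigr => x _; case: (x \in A). Qed.

Lemma S_sum (F : finFieldType) p :
  #|S_points F p| = (\sum_(x : F) \sum_(z : F)
     #|[set y : F | (y ^+ p - y == x ^+ p.+1 * z ^+ 2 + x ^+ 2 * z ^+ p.+1)%R]|)%N.
Proof.
transitivity (\sum_(t : F * F * F) (onS p t.1.1 t.1.2 t.2 : nat))%N.
  rewrite -sum1_card big_mkcond /=; apply eq_bigr => t _; rewrite inE.
  by case: onS.
symmetry.
transitivity (\sum_(x : F) \sum_(y : F) \sum_(z : F) (onS p x y z : nat))%N.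
  apply eq_bigr => x _; rewrite [RHS]exchange_big /=.
  apply eq_bigr => z _.
  rewrite -sum1_card big_mkcond /=; apply eq_bigr => y _; rewrite inE /onS.
  by case: eqP.
rewrite pair_bigA pair_bigA /=.
by apply eq_bigr.
Qed.

Theorem proposition4p3 (p : nat) (hp : prime p) (hodd : odd p)
  (F : finFieldType) (hF : #|F| = (p ^ 2)%N) :
  #|S_points F p| = (p * (2 * (p - 1) ^ 3 + 2 * (p - 1) ^ 2 + 2 * p ^ 2 - 1))%N
  /\ #|S_points F p| = (2 * p ^ 4 - 2 * p ^ 3 + 2 * p ^ 2 - p)%N.
Proof.
have chF := card_finPcharP hF hp.
have p1 := prime_gt1 hp.
have p0 : p != 0%N by rewrite gtn_eqF // ltnW.
have [hK hA fib] := AS_all hp hF.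
set C := fun x : F => [set z : F | ((x * z) ^+ p + x * z == 0) || ((x ^+ p * z) ^+ p + x ^+ p * z == 0)].
have e1 : #|S_points F p| = ((\sum_(x : F) #|C x|) * p)%N.
  rewrite S_sum big_distrl /=; apply eq_bigr => x _.
  rewrite (eq_bigr _ (fun z _ => fib _)) -big_mkcond /= sum_nat_const.
  congr (_ * _)%N; apply: eq_card => z; rewrite !inE.
  exact: Trf.
set B := [set x : F | (x ^+ p == x) || (x ^+ p == - x)].
have hB : #|B| = (2 * p - 1)%N.
  have -> : B = [set y : F | y ^+ p - y == 0] :|: [set c : F | c ^+ p + c == 0].
    by apply/setP => x; rewrite !inE subr_eq0 addr_eq0.
  rewrite cardsU hK hA.
  have -> : [set y : F | y ^+ p - y == 0] :&: [set c : F | c ^+ p + c == 0] = [set 0].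
    apply/setP => x; rewrite !inE; apply/andP/eqP; last first.
      by move=> ->; rewrite expr0n /= (negbTE p0) subr0 addr0.
    case; rewrite subr_eq0 => /eqP ->.
    rewrite -mulr2n -mulr_natl mulf_eq0 => /orP [|/eqP //].
    rewrite -(dvdn_pcharf chF) => H.
    have Hle := dvdn_leq (isT : (0 < 2)%N) H.
    have p2 : p = 2%N by lia.
    by move: hodd; rewrite p2.
  by rewrite cards1; lia.
have hx : forall x : F, (#|C x| + p.-1 * (x \in B) = (2 * p - 1) + (p ^ 2 - p) * (x == 0%R))%N.
  move=> x; case: (eqVneq x 0) => [->|x0].
    have -> : C 0 = setT.
      by apply/setP => z; rewrite !inE !mul0r expr0n /= (negbTE p0) addr0 eqxx.
    rewrite cardsT hF !inE expr0n /= (negbTE p0) eqxx /=.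
    nia.
  rewrite cnt_x // /= inE; case: ifP => _ /=; nia.
have hsum : (\sum_(x : F) (#|C x| + p.-1 * (x \in B)) = \sum_(x : F) (2 * p - 1 + (p ^ 2 - p) * (x == 0%R)))%N.
  by apply eq_bigr => x _; exact: hx x.
rewrite big_split /= big_split /= -!big_distrr /= in hsum.
have sB : (\sum_(x : F) (x \in B : nat))%N = #|B|.
  exact: sum_ind.
have s0 : (\sum_(x : F) (x == 0%R : nat))%N = 1%N.
  rewrite (bigD1 0) //= eqxx big1 // => x /negbTE -> //.
rewrite sB s0 sum_nat_const in hsum.
rewrite -[#|xpredT|]/#|F| in hsum.
rewrite e1 hF hB in hsum *.
move: hsum; set N := (\sum_i #|C i|)%N => hsum.
have [q hq] : exists q, p = q.+2 by exists p.-2; lia.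
clear -hsum hq; subst p.
have E1 : (q.+2 - 1 = q.+1)%N by lia.
have E2 : (2 * q.+2 - 1 = 2 * q + 3)%N by lia.
rewrite E1 E2 in hsum *.
rewrite !expnS !expn0 !muln1 in hsum *.
have hN : N = (2*q*q*q + 10*q*q + 18*q + 11)%N by nia.
rewrite hN.
split; nia.
Qed.
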